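(* Let $A=\sigma(R)\langle x_1,\dots,x_n\rangle$ be a quasi-commutative bijective $\sigma$-PBW extension of a left Noetherian ring $R$. Let $c_1,\dots,c_t\in R\setminus\{0\}$ and let $\mathbf X_1=X_1\mathbf e_{i_1},\dots,\mathbf X_t=X_t\mathbf e_{i_t}$ be monomials of $A^m$ (the indices $i_1,\dots,i_t\in\{1,\dots,m\}$ need not be distinct). Let $L=[c_1\mathbf X_1\ \cdots\ c_t\mathbf X_t]$ and $$\mathrm{Syz}(L)=\{(h_1,\dots,h_t)^T\in A^t:\ h_1c_1\mathbf X_1+\dots+h_tc_t\mathbf X_t=\mathbf 0\}.$$ Then $\mathrm{Syz}(L)$ has a finite generating set consisting of homogeneous syzygies.
   Context: Let $R\subseteq A$ be rings. $A$ is a $\sigma$-PBW extension of $R$, written $A=\sigma(R)\langle x_1,\dots,x_n\rangle$, if there are $x_1,\dots,x_n\in A\setminus R$ such that: (i) $A$ is a free left $R$-module with basis $\mathrm{Mon}(A)=\{x^\alpha=x_1^{\alpha_1}\cdots x_n^{\alpha_n}:\alpha\in\mathbb N^n\}$, with $x^0=1$; (ii) for every $i$ and every $r\in R\setminus\{0\}$ there is $c_{i,r}\in R\setminus\{0\}$ with $x_ir-c_{i,r}x_i\in R$; (iii) for all $i,j$ there is $c_{i,j}\in R\setminus\{0\}$ with $x_jx_i-c_{i,j}x_ix_j\in R+Rx_1+\dots+Rx_n$. There are injective ring endomorphisms $\sigma_i$ of $R$ with $x_ir=\sigma_i(r)x_i+\delta_i(r)$, where $\delta_i$ are $\sigma_i$-derivations.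 $A$ is quasi-commutative if $x_ir=c_{i,r}x_i$ and $x_jx_i=c_{i,j}x_ix_j$ exactly. $A$ is bijective if each $\sigma_i$ is bijective and $c_{i,j}$ is invertible for $i<j$. $\mathrm{Mon}(A)$ carries a monomial order, i.e. a total order $\succeq$ with: - $x^\beta\succeq x^\alpha\Rightarrow lm(x^\gamma x^\beta x^\lambda)\succeq lm(x^\gamma x^\alpha x^\lambda)$; - $x^\alpha\succeq1$; - degree compatibility. $lm$ denotes the leading monomial; $lm(x^\alpha x^\beta)=x^{\alpha+\beta}$. $A^m$ is the free left $A$-module of column vectors with canonical basis $\mathbf e_1,\dots,\mathbf e_m$. Monomials of $A^m$ are $X\mathbf e_i$ with $X\in\mathrm{Mon}(A)$. A term of $A$ is an element $cx^\alpha$ with $c\in R$. A syzygy $\mathbf h=(h_1,\dots,h_t)^T\in\mathrm{Syz}(L)$ is homogeneous of degree $\mathbf X=X\mathbf e_i$ ($X\in\mathrm{Mon}(A)$) if: - each $h_j$ is a term; - for each $j$, either $h_j=0$ or $lm(lm(h_j)\mathbf X_j)=\mathbf X$, where $lm(x^\gamma\cdot x^\alpha\mathbf e_i)=x^{\gamma+\alpha}\mathbf e_i$. *)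

(* Defs.v *)
From HB Require Import structures.
From mathcomp Require Import all_boot all_order all_algebra.
Set Implicit Arguments. Unset Strict Implicit. Unset Printing Implicit Defensive.
Import GRing.Theory.
Local Open Scope ring_scope.

Definition expo (n : nat) := {ffun 'I_n -> nat}.

Definition expo_add (n : nat) (a b : expo n) : expo n := [ffun i => (a i + b i)%N].

Definition mon (A : nzRingType) (n : nat) (x : 'I_n -> A) (a : expo n) : A :=
  \prod_(i < n) x i ^+ a i.

Definition left_ideal (R : nzRingType) (I : pred R) : Prop :=
  0 \in I /\ (forall a b, a \in I -> b \in I -> a + b \in I) /\
  (forall r a, a \in I -> r * a \in I).

Definition left_noetherian (R : nzRingType) : Prop :=
  forall I : pred R, left_ideal I ->
    exists s : seq R, forall a : R,
      a \in I <-> exists c : 'I_(size s) -> R, a = \sum_(k < size s) c k * s`_k.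

Definition sigma_PBW (R A : nzRingType) (iota : {rmorphism R -> A}) (n : nat)
    (x : 'I_n -> A) : Prop :=
  injective iota /\
  (forall i r, x i <> iota r) /\
  (forall a : A, exists s : seq (expo n * R),
      a = \sum_(p <- s) iota p.2 * mon x p.1) /\
  (forall (s : seq (expo n)) (c : expo n -> R), uniq s ->
      \sum_(al <- s) iota (c al) * mon x al = 0 -> forall al, al \in s -> c al = 0) /\
  (forall i (r : R), r != 0 -> exists c : R, c != 0 /\
      exists r' : R, x i * iota r - iota c * x i = iota r') /\
  (forall i j, exists c : R, c != 0 /\
      exists (r0 : R) (r : 'I_n -> R),
        x j * x i - iota c * x i * x j = iota r0 + \sum_(k < n) iota (r k) * x k).

Definition quasi_commutative (R A : nzRingType) (iota : {rmorphism R -> A}) (n : nat)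
    (x : 'I_n -> A) : Prop :=
  (forall i (r : R), r != 0 -> exists c : R, c != 0 /\ x i * iota r = iota c * x i) /\
  (forall i j, exists c : R, c != 0 /\ x j * x i = iota c * x i * x j).

Definition bijective_PBW (R A : nzRingType) (iota : {rmorphism R -> A}) (n : nat)
    (x : 'I_n -> A) : Prop :=
  (exists (sigma delta : 'I_n -> R -> R),
      (forall i r, x i * iota r = iota (sigma i r) * x i + iota (delta i r)) /\
      (forall i, bijective (sigma i))) /\
  (forall i j : 'I_n, (i < j)%N -> exists c : R, (exists d : R, c * d = 1 /\ d * c = 1) /\
      exists (r0 : R) (r : 'I_n -> R),
        x j * x i - iota c * x i * x j = iota r0 + \sum_(k < n) iota (r k) * x k).

Definition vec_e (A : nzRingType) (m : nat) (i : 'I_m) (a : A) : 'cV[A]_m :=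
  \col_(l < m) (if l == i then a else 0).

(* Syz(L) for L = [c_1 X_1 ... c_t X_t], X_k = x^{al_k} e_{idx_k}. *)
Definition syzygy (R A : nzRingType) (iota : {rmorphism R -> A}) (n m t : nat)
    (x : 'I_n -> A) (c : 'I_t -> R) (al : 'I_t -> expo n) (idx : 'I_t -> 'I_m)
    (h : 'cV[A]_t) : Prop :=
  \sum_(k < t) vec_e (idx k) (h k 0 * (iota (c k) * mon x (al k))) = 0.

Definition is_term (R A : nzRingType) (iota : {rmorphism R -> A}) (n : nat)
    (x : 'I_n -> A) (a : A) : Prop :=
  exists (d : R) (g : expo n), a = iota d * mon x g.

(* h is homogeneous of degree x^be e_i: each h_j is a term and, when h_j <> 0,
   lm(lm(h_j) X_j) = X, i.e. writing h_j = d x^gamma (d <> 0, so lm h_j = x^gamma),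
   idx_j = i and gamma + al_j = be. *)
Definition homogeneous_of_degree (R A : nzRingType) (iota : {rmorphism R -> A})
    (n m t : nat) (x : 'I_n -> A) (al : 'I_t -> expo n) (idx : 'I_t -> 'I_m)
    (h : 'cV[A]_t) (be : expo n) (i : 'I_m) : Prop :=
  forall j : 'I_t, exists (d : R) (g : expo n),
    h j 0 = iota d * mon x g /\
    (h j 0 = 0 \/ (idx j = i /\ expo_add g (al j) = be)).

Definition homogeneous_syz (R A : nzRingType) (iota : {rmorphism R -> A})
    (n m t : nat) (x : 'I_n -> A) (al : 'I_t -> expo n) (idx : 'I_t -> 'I_m)
    (h : 'cV[A]_t) : Prop :=
  exists (be : expo n) (i : 'I_m), homogeneous_of_degree iota x al idx h be i.

(* Main.v *)
Require Import Defs.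
From HB Require Import structures.
From mathcomp Require Import all_boot all_order all_algebra.
From mathcomp Require Import zify.
From mathcomp Require boolp.
Set Implicit Arguments. Unset Strict Implicit. Unset Printing Implicit Defensive.
Import GRing.Theory.
Local Open Scope ring_scope.

HB.instance Definition _ (n : nat) := Choice.copy (expo n) {ffun 'I_n -> nat}.

Fixpoint inspan (S : pzRingType) (V : lmodType S) (s : seq V) (v : V) : Prop :=
  if s is g :: s' then exists r w, inspan s' w /\ v = r *: g + w else v = 0.

Section Inspan.
Variables (S : pzRingType) (V : lmodType S).
Implicit Types (s : seq V) (v : V).

Lemma inspan0 s : inspan s 0.
Proof. elim: s => //= g s IH; exists 0, 0; by rewrite scale0r addr0. Qed.

Lemma inspanD s u v : inspan s u -> inspan s v -> inspan s (u + v).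
Proof.
elim: s u v => [|g s IH] u v /=; first by move=> -> ->; rewrite addr0.
move=> [r [w [hw ->]]] [r' [w' [hw' ->]]]; exists (r + r'), (w + w'); split; first exact: IH.
by rewrite scalerDl addrACA.
Qed.

Lemma inspanZ s a u : inspan s u -> inspan s (a *: u).
Proof.
elim: s u => [|g s IH] u /=; first by move=> ->; rewrite scaler0.
move=> [r [w [hw ->]]]; exists (a * r), (a *: w); split; first exact: IH.
by rewrite scalerDr scalerA.
Qed.

Lemma inspan_sum s (I : Type) (l : seq I) (F : I -> V) :
  (forall i, inspan s (F i)) -> inspan s (\sum_(i <- l) F i).
Proof.
move=> h; apply: (big_ind (inspan s)) => //; [exact: inspan0 | exact: inspanD].
Qed.

Lemma inspan_catl s s' v : inspan s v -> inspan (s ++ s') v.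
Proof.
elim: s v => [|g s IH] v /=; first by move=> ->; apply: inspan0.
by move=> [r [w [hw ->]]]; exists r, w; split=> //; apply: IH.
Qed.

Lemma inspan_catr s s' v : inspan s' v -> inspan (s ++ s') v.
Proof.
elim: s v => [|g s IH] v //= hv; exists 0, v; split; first exact: IH.
by rewrite scale0r add0r.
Qed.

Lemma inspan_mem (s : seq V) g : g \in s -> inspan s g.
Proof.
elim: s => [|g' s IH] //=; rewrite inE => /orP[/eqP ->|gs].
  by exists 1, 0; split; [apply: inspan0 | rewrite scale1r addr0].
by exists 0, g; split; [apply: IH | rewrite scale0r add0r].
Qed.

Lemma inspan_sub (s s' : seq V) v : (forall g, g \in s -> g \in s') ->
  inspan s v -> inspan s' v.
Proof.
elim: s v => [|g s IH] v hs /=; first by move=> ->; apply: inspan0.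
move=> [r [w [hw ->]]]; apply: inspanD; first by apply/inspanZ/inspan_mem/hs; rewrite inE eqxx.
by apply: IH => // g' g's; apply: hs; rewrite inE g's orbT.
Qed.

Lemma inspan_idx s v : inspan s v ->
  exists a : 'I_(size s) -> S, v = \sum_(k < size s) a k *: s`_k.
Proof.
elim: s v => [|g s IH] v /=; first by move=> ->; exists (fun=> 0); rewrite big_ord0.
move=> [r [w [/IH [a ->] ->]]].
exists (fun k : 'I_(size s).+1 => if unlift ord0 k is Some k' then a k' else r).
rewrite big_ord_recl /= unlift_none; congr (_ + _); apply: eq_bigr => i _ /=.
by rewrite liftK.
Qed.
End Inspan.

Lemma noeth_mod (R : nzRingType) (hN : forall I : pred R, (0 \in I /\ (forall a b, a \in I -> b \in I -> a + b \in I) /\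
  (forall r a, a \in I -> r * a \in I)) ->
    exists s : seq R, forall a : R,
      a \in I <-> exists c : 'I_(size s) -> R, a = \sum_(k < size s) c k * s`_k)
  (t : nat) (P : pred 'cV[R]_t) :
  0 \in P -> (forall u v, u \in P -> v \in P -> u + v \in P) ->
  (forall a u, u \in P -> a *: u \in P) ->
  exists gens : seq 'cV[R]_t, (forall g, g \in gens -> g \in P) /\
     (forall v, v \in P -> inspan gens v).
Proof.
move=> P0 PD PZ.
suff: forall k, (k <= t)%N -> exists gens : seq 'cV[R]_t, (forall g, g \in gens -> g \in P) /\
   (forall v, v \in P -> (forall j : 'I_t, (k <= j)%N -> v j 0 = 0) -> inspan gens v).
  move/(_ t (leqnn t)) => [gens [H1 H2]]; exists gens; split=> // v vP.
  by apply: H2 => // j; rewrite leqNgt ltn_ord.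
elim=> [_|k IH kt].
  exists [::]; split=> // v _ hv /=; apply/matrixP => i j.
  by rewrite (ord1 j) mxE hv.
have [gens0 [G1 G2]] := IH (ltnW kt).
pose jk := Ordinal kt.
pose Pk (v : 'cV[R]_t) := v \in P /\ forall j : 'I_t, (k.+1 <= j)%N -> v j 0 = 0.
pose I := fun a : R => boolp.asbool (exists v, Pk v /\ v jk 0 = a).
have hI : 0 \in I /\ (forall a b, a \in I -> b \in I -> a + b \in I) /\
  (forall r a, a \in I -> r * a \in I).
  split; [|split].
  - apply/boolp.asboolP; exists 0; split; last by rewrite mxE.
    by split=> // j _; rewrite mxE.
  - move=> a b /boolp.asboolP [u [[uP u0] ua]] /boolp.asboolP [v [[vP v0] va]].
    apply/boolp.asboolP; exists (u + v); split; last by rewrite mxE ua va.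
    by split; [apply: (PD) | move=> j hj; rewrite mxE u0 ?v0 ?addr0].
  - move=> r a /boolp.asboolP [u [[uP u0] ua]].
    apply/boolp.asboolP; exists (r *: u); split; last by rewrite mxE ua.
    by split; [apply: (PZ) | move=> j hj; rewrite mxE u0 ?mulr0].
have [s hs] := hN I hI.
have sI : forall l : 'I_(size s), exists v, Pk v /\ v jk 0 = s`_l.
  move=> l; have : s`_l \in I.
    apply/hs; exists (fun k => (k == l)%:R).
    rewrite (bigD1 l) //= eqxx mul1r big1 ?addr0 // => i /negPf ->.
    by rewrite mul0r.
  by move/boolp.asboolP.
have [V hV] := fin_all_exists sI.
exists (gens0 ++ [seq V l | l <- enum 'I_(size s)]); split.
  move=> g; rewrite mem_cat => /orP[/G1 //|/mapP [l _ ->]].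
  by case: (hV l) => [[]].
move=> v vP v0.
have : v jk 0 \in I by apply/boolp.asboolP; exists v; split.
move/hs => [cc hcc].
pose w := v - \sum_(l < size s) cc l *: V l.
have -> : v = w + \sum_(l < size s) cc l *: V l by rewrite /w subrK.
apply: inspanD.
  apply: inspan_catl; apply: G2.
    rewrite /w; apply: (PD) => //; rewrite -scaleN1r; apply: (PZ).
    apply: (big_ind (fun u => u \in P)); [exact: P0 | exact: PD | ].
    by move=> l _; apply: (PZ); case: (hV l) => [[]].
  move=> j hj; rewrite /w !mxE summxE.
  case: (ltngtP k j) => hkj.
  - rewrite v0 // big1 ?subrr // => l _; rewrite mxE.
    by case: (hV l) => [[_ h0] _]; rewrite h0 ?mulr0.
  - by move: hj; rewrite leqNgt hkj.
  - have -> : j = jk by apply: val_inj.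
    rewrite hcc; apply/eqP; rewrite subr_eq0; apply/eqP; apply: eq_bigr => l _.
    by rewrite mxE; case: (hV l) => [_ ->].
apply: inspan_catr; apply: inspan_sum => l; apply: inspanZ; apply: inspan_mem.
by apply: map_f; rewrite mem_enum.
Qed.

Lemma sum_pick (V : nmodType) (I : eqType) (U : seq I) (a : I) (G : V) :
  uniq U -> \sum_(u <- U) (if a == u then G else 0) = if a \in U then G else 0.
Proof.
move=> uU; case: ifP => aU; last first.
  by rewrite big1_seq // => u /andP[_ uU']; case: eqP => // e; subst u; rewrite uU' in aU.
rewrite (big_rem a) //= eqxx big1_seq ?addr0 // => u /andP[_ uin].
case: eqP => // eu; subst u; move: uin; rewrite mem_rem_uniqF //.
Qed.

Lemma regroup (V : nmodType) (I : eqType) (T : eqType) (s : seq T) (f : T -> I)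
   (F : T -> V) (U : seq I) : uniq U -> (forall p, p \in s -> f p \in U) ->
  \sum_(p <- s) F p = \sum_(u <- U) \sum_(p <- s | f p == u) F p.
Proof.
move=> uU sU.
under [RHS]eq_bigr do rewrite big_mkcond.
rewrite exchange_big /= big_seq [RHS]big_seq; apply: eq_bigr => p ps.
by rewrite sum_pick // sU.
Qed.

Section PBW.
Variables (R A : nzRingType) (iota : {rmorphism R -> A}) (n : nat) (x : 'I_n -> A).
Hypothesis hPBW : sigma_PBW iota x.
Hypothesis hqc : quasi_commutative iota x.
Hypothesis hbij : bijective_PBW iota x.

Local Notation mon := (mon x).
Local Notation E := (expo n).

Lemma rep_ex (a : A) : exists s : seq (E * R), a == \sum_(p <- s) iota p.2 * mon p.1.
Proof. by case: hPBW => _ [_ [h _]]; have [s hs] := h a; exists s; apply/eqP. Qed.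

Definition rep a := xchoose (rep_ex a).
Lemma repE a : a = \sum_(p <- rep a) iota p.2 * mon p.1.
Proof. exact/eqP/(xchooseP (rep_ex a)). Qed.

Definition coef (a : A) (b : E) : R := \sum_(p <- rep a | p.1 == b) p.2.

Lemma indep_seq (s : seq (E * R)) : \sum_(p <- s) iota p.2 * mon p.1 = 0 ->
  forall b, \sum_(p <- s | p.1 == b) p.2 = 0.
Proof.
move=> h0 b; case: hPBW => _ [_ [_ [hind _]]].
pose U := undup (map fst s).
have uU : uniq U by apply: undup_uniq.
have sU : forall p, p \in s -> p.1 \in U by move=> p ps; rewrite mem_undup map_f.
rewrite (regroup (fun p => iota p.2 * mon p.1) uU sU) in h0.
have h1 : \sum_(u <- U) iota (\sum_(p <- s | p.1 == u) p.2) * mon u = 0.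
  apply: etrans h0; apply: eq_bigr => u _; rewrite rmorph_sum mulr_suml.
  by apply: eq_bigr => p /eqP ->.
case bU : (b \in U).
  exact: (hind U (fun u => \sum_(p <- s | p.1 == u) p.2) uU h1 b bU).
rewrite big1_seq // => p /andP[/eqP e ps]; move: (sU p ps); rewrite e bU.
by [].
Qed.

Lemma coef_rep (s : seq (E * R)) a : a = \sum_(p <- s) iota p.2 * mon p.1 ->
  forall b, coef a b = \sum_(p <- s | p.1 == b) p.2.
Proof.
move=> ha b.
pose s2 := rep a ++ map (fun p => (p.1, - p.2)) s.
have h0 : \sum_(p <- s2) iota p.2 * mon p.1 = 0.
  rewrite big_cat big_map /= -repE {1}ha -big_split /=; apply: big1 => p _.
  by rewrite rmorphN mulNr subrr.
have := indep_seq h0 b; rewrite big_cat big_map /= sumrN.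
by move/eqP; rewrite subr_eq0 => /eqP.
Qed.

Lemma coef0 b : coef 0 b = 0.
Proof.
have e : (0 : A) = \sum_(p <- [::]) iota p.2 * mon p.1 by rewrite big_nil.
by rewrite (coef_rep e) big_nil.
Qed.

Lemma coefD a a' b : coef (a + a') b = coef a b + coef a' b.
Proof.
have e : a + a' = \sum_(p <- rep a ++ rep a') iota p.2 * mon p.1.
  by rewrite big_cat /= -!repE.
by rewrite (coef_rep e) big_cat.
Qed.

Lemma coefN a b : coef (- a) b = - coef a b.
Proof.
have e : - a = \sum_(p <- map (fun p => (p.1, - p.2)) (rep a)) iota p.2 * mon p.1.
  rewrite big_map /= {1}(repE a) -sumrN; apply: eq_bigr => p _.
  by rewrite rmorphN mulNr.
by rewrite (coef_rep e) big_map /= sumrN.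
Qed.

Lemma coefB a a' b : coef (a - a') b = coef a b - coef a' b.
Proof. by rewrite coefD coefN. Qed.

Lemma coef_sum (I : Type) (l : seq I) (F : I -> A) b :
  coef (\sum_(i <- l) F i) b = \sum_(i <- l) coef (F i) b.
Proof.
elim: l => [|i l IH]; first by rewrite !big_nil coef0.
by rewrite !big_cons coefD IH.
Qed.

Lemma coef_term r g b : coef (iota r * mon g) b = if g == b then r else 0.
Proof.
have e : iota r * mon g = \sum_(p <- [:: (g, r)]) iota p.2 * mon p.1.
  by rewrite big_cons big_nil addr0.
rewrite (coef_rep e) big_cons big_nil /=.
by case: eqP; rewrite ?addr0.
Qed.

Lemma coef_ext a : (forall b, coef a b = 0) -> a = 0.
Proof.
move=> h; rewrite (repE a).
pose U := undup (map fst (rep a)).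
have uU : uniq U by apply: undup_uniq.
have sU : forall p, p \in rep a -> p.1 \in U by move=> p ps; rewrite mem_undup map_f.
rewrite (regroup (fun p => iota p.2 * mon p.1) uU sU) big1 // => u _.
transitivity (iota (coef a u) * mon u); last by rewrite h rmorph0 mul0r.
rewrite rmorph_sum mulr_suml; apply: eq_bigr => p /eqP ->.
by [].
Qed.

Lemma coef_inj a a' : (forall b, coef a b = coef a' b) -> a = a'.
Proof.
move=> h; apply/eqP; rewrite -subr_eq0; apply/eqP/coef_ext => b.
by rewrite coefB h subrr.
Qed.

Definition ez : E := [ffun => 0%N].
Definition ue (i : 'I_n) : E := [ffun k => nat_of_bool (k == i)].

Lemma mon0 : mon ez = 1.
Proof. by rewrite /Defs.mon big1 // => k _; rewrite ffunE expr0. Qed.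

Lemma prod_single (r : seq 'I_n) (F : 'I_n -> A) i :
  uniq r -> i \in r -> (forall k, k \in r -> k != i -> F k = 1) -> \prod_(k <- r) F k = F i.
Proof.
elim: r => [|k r IH] //= /andP[kr ur]; rewrite inE big_cons => /orP[/eqP e|ir] h1.
  subst k; rewrite big1_seq ?mulr1 // => j /andP[_ jr]; apply: h1.
    by rewrite inE jr orbT.
  by apply/eqP => e; subst j; rewrite jr in kr.
have -> : F k = 1.
  apply: h1; first by rewrite inE eqxx.
  by apply/eqP => e; subst k; rewrite ir in kr.
rewrite mul1r; apply: IH => // j jr; apply: h1; by rewrite inE jr orbT.
Qed.

Lemma mon_ue i : mon (ue i) = x i.
Proof.
rewrite /Defs.mon (@prod_single _ _ i) ?index_enum_uniq ?mem_index_enum //.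
  by rewrite ffunE eqxx expr1.
by move=> k _ /negPf ki; rewrite ffunE ki expr0.
Qed.

Lemma coef_x r i b : coef (iota r * x i) b = if ue i == b then r else 0.
Proof. by rewrite -mon_ue coef_term. Qed.

Lemma coef_const r b : coef (iota r) b = if ez == b then r else 0.
Proof. by rewrite -[iota r]mulr1 -mon0 coef_term. Qed.

Lemma ue_ez i : (ue i == ez) = false.
Proof. by apply/eqP => /ffunP /(_ i); rewrite !ffunE eqxx. Qed.

Lemma prod_two (r : seq 'I_n) (F : 'I_n -> A) k i :
  uniq r -> k \in r -> i \in r -> (index k r < index i r)%N ->
  (forall j, j \in r -> j != k -> j != i -> F j = 1) -> \prod_(j <- r) F j = F k * F i.
Proof.
elim: r => [|j r IH] //= /andP[jr ur]; rewrite !inE big_cons => kin iin.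
case: (eqVneq j k) => [e|jk].
  subst j; case: (eqVneq k i) => [e|kni]; first by [].
  rewrite eq_sym (negPf kni) /= in iin; move=> _ h1.
  rewrite (@prod_single _ _ i) //.
  move=> j' j'r j'i; apply: h1; rewrite ?inE ?j'r ?orbT //.
  by apply/eqP => e; subst j'; rewrite j'r in jr.
case: (eqVneq j i) => [e|ji]; first by [].
rewrite ltnS => hlt h1.
rewrite h1 ?inE ?eqxx // mul1r IH //.
- by move: kin; rewrite eq_sym (negPf jk).
- by move: iin; rewrite eq_sym (negPf ji).
- by move=> j' j'r; apply: h1; rewrite inE j'r orbT.
Qed.

Definition unitR (u : R) := exists v, u * v = 1 /\ v * u = 1.

Lemma mon2 (k i : 'I_n) : (k < i)%N -> mon (expo_add (ue k) (ue i)) = x k * x i.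
Proof.
move=> ki.
have kni : k != i by apply/eqP => e; subst k; rewrite ltnn in ki.
rewrite /Defs.mon (@prod_two _ _ k i) ?index_enum_uniq ?mem_index_enum //.
- by rewrite !ffunE eqxx (negPf kni) eq_sym (negPf kni) eqxx /= !expr1.
- by rewrite [index_enum _]unlock -enumT !index_enum_ord.
- by move=> j _ /negPf jk /negPf ji; rewrite !ffunE jk ji expr0.
Qed.

Lemma sigma_ex : exists sigma : 'I_n -> R -> R,
  (forall i r, x i * iota r = iota (sigma i r) * x i) /\ (forall i, bijective (sigma i)).
Proof.
case: hbij => [[sigma [delta [hrel hb]]] _]; exists sigma; split=> // i r.
have hd : delta i r = 0.
  have h0 : coef (x i * iota r) ez = 0.
    case: (eqVneq r 0) => [->|rn0]; first by rewrite rmorph0 mulr0 coef0.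
    case: hqc => [hq _]; have [c' [_ ->]] := hq i r rn0.
    by rewrite coef_x ue_ez.
  by move: h0; rewrite hrel coefD coef_x ue_ez coef_const eqxx add0r.
by rewrite hrel hd rmorph0 addr0.
Qed.

Lemma c_unit (k i : 'I_n) : (k < i)%N -> exists u, unitR u /\ x i * x k = iota u * x k * x i.
Proof.
move=> ki; case: hqc => [_ hq2]; have [c1 [_ e1]] := hq2 k i.
case: hbij => [_ /(_ k i ki) [c2 [hu [r0 [rr e2]]]]].
exists c1; split=> //.
have : c1 = c2.
  have e3 : iota (c1 - c2) * mon (expo_add (ue k) (ue i)) =
      iota r0 + \sum_(l < n) iota (rr l) * x l.
    by rewrite -e2 mon2 // rmorphB mulrBl e1 !mulrA.
  have := congr1 (coef^~ (expo_add (ue k) (ue i))) e3.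
  rewrite coef_term eqxx coefD coef_const coef_sum big1.
    have -> : (ez == expo_add (ue k) (ue i)) = false.
      by apply/eqP => /ffunP /(_ k); rewrite !ffunE eqxx.
    by rewrite addr0 => /eqP; rewrite subr_eq0 => /eqP.
  move=> l _; rewrite coef_x; case: eqP => // /ffunP h.
  have kni : k != i by apply/eqP => e; subst k; rewrite ltnn in ki.
  case: (eqVneq l k) => [e|lk].
    by subst l; move: (h i); rewrite !ffunE eqxx eq_sym (negPf kni).
  by move: (h k); rewrite !ffunE eqxx eq_sym (negPf lk).
by move=> ->.
Qed.

Lemma unitR1 : unitR 1.
Proof. by exists 1; rewrite mulr1. Qed.

Lemma unitRM u v : unitR u -> unitR v -> unitR (u * v).
Proof.
move=> [u' [h1 h2]] [v' [h3 h4]]; exists (v' * u'); split.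
  by rewrite mulrA -(mulrA u) h3 mulr1 h1.
by rewrite mulrA -(mulrA v') h2 mulr1 h4.
Qed.

Lemma iota_x_inj i a b : iota a * x i = iota b * x i -> a = b.
Proof. by move/(congr1 (coef^~ (ue i))); rewrite !coef_x eqxx. Qed.

Section Sig.
Variable sigma : 'I_n -> R -> R.
Hypothesis hsig : forall i r, x i * iota r = iota (sigma i r) * x i.
Hypothesis hsigb : forall i, bijective (sigma i).

Lemma sig_mul i a b : sigma i (a * b) = sigma i a * sigma i b.
Proof.
apply: (@iota_x_inj i); rewrite -hsig rmorphM mulrA hsig -mulrA hsig.
by rewrite mulrA -rmorphM.
Qed.

Lemma sig1 i : sigma i 1 = 1.
Proof. by apply: (@iota_x_inj i); rewrite -hsig !rmorph1 mulr1 mul1r. Qed.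

Lemma sig0 i : sigma i 0 = 0.
Proof. by apply: (@iota_x_inj i); rewrite -hsig !rmorph0 mulr0 mul0r. Qed.

Lemma sig_unit i u : unitR u -> unitR (sigma i u).
Proof.
move=> [v [h1 h2]]; exists (sigma i v); split.
  by rewrite -sig_mul h1 sig1.
by rewrite -sig_mul h2 sig1.
Qed.

Lemma sig_inj0 i r : sigma i r = 0 -> r = 0.
Proof. by move=> h; apply: (bij_inj (hsigb i)); rewrite h sig0. Qed.

Definition Good (a : A) :=
  (forall r, exists r', a * iota r = iota r' * a /\ (unitR r -> unitR r') /\ (r' = 0 -> r = 0))
  /\ (forall r', exists r, a * iota r = iota r' * a).

Lemma good1 : Good 1.
Proof. by split=> r; exists r; rewrite mulr1 mul1r. Qed.

Lemma good_x i : Good (x i).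
Proof.
split=> r.
  exists (sigma i r); split; first exact: hsig.
  by split; [apply: sig_unit | apply: sig_inj0].
case: (hsigb i) => g _ hg; exists (g r); by rewrite hsig hg.
Qed.

Lemma goodM a b : Good a -> Good b -> Good (a * b).
Proof.
move=> [ha1 ha2] [hb1 hb2]; split=> r.
  have [r1 [e1 [u1 z1]]] := hb1 r; have [r2 [e2 [u2 z2]]] := ha1 r1.
  exists r2; split; first by rewrite -mulrA e1 mulrA e2 mulrA.
  by split=> h; [apply: u2; apply: u1 | apply: z1; apply: z2].
have [r1 e1] := ha2 r; have [r2 e2] := hb2 r1.
by exists r2; rewrite -mulrA e2 mulrA e1 mulrA.
Qed.

Lemma good_exp a e : Good a -> Good (a ^+ e).
Proof.
move=> ha; elim: e => [|e IH]; first by rewrite expr0; apply: good1.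
by rewrite exprS; apply: goodM.
Qed.

Lemma good_mon g : Good (mon g).
Proof.
rewrite /Defs.mon; apply: (big_ind Good); [exact: good1 | exact: goodM |].
by move=> i _; apply/good_exp/good_x.
Qed.


Lemma mon_eq (a b : E) : (forall j, a j = b j) -> mon a = mon b.
Proof. by move=> h; congr (Defs.mon _ _); apply/ffunP. Qed.

Lemma xi_xk_pow (k i : 'I_n) e : (k < i)%N ->
  exists u, unitR u /\ x i * x k ^+ e = iota u * x k ^+ e * x i.
Proof.
move=> ki; elim: e => [|e [u [hu IH]]].
  exists 1; split; first exact: unitR1.
  by rewrite !expr0 rmorph1 !mul1r !mulr1.
have [c [hc ec]] := c_unit ki.
exists (c * sigma k u); split; first by apply: unitRM => //; apply: sig_unit.
by rewrite exprS mulrA ec -mulrA IH !mulrA -(mulrA (iota c)) hsig rmorphM !mulrA.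
Qed.

Lemma X_gen (i : 'I_n) (f : 'I_n -> nat) (r : seq 'I_n) :
  sorted ltn (map val r) -> i \in r -> exists u, unitR u /\
  x i * \prod_(k <- r) x k ^+ f k = iota u * \prod_(k <- r) x k ^+ (f k + (k == i)).
Proof.
elim: r => [|k r IH] //= hs; rewrite inE => hi.
have hall : all (ltn k) (map val r) by apply: (order_path_min ltn_trans hs).
have hs' : sorted ltn (map val r) by apply: (path_sorted hs).
case: (eqVneq k i) => [e|kni].
  subst k; exists 1; split; first exact: unitR1.
  rewrite !big_cons rmorph1 mul1r eqxx addn1 exprS mulrA.
  congr (_ * _); apply: eq_big_seq => j jr.
  have : (i < j)%N by move/allP: hall; apply; rewrite map_f.
  by case: eqP => [->|_]; rewrite ?ltnn ?addn0.
have ir : i \in r by move: hi; rewrite eq_sym (negPf kni).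
have ki : (k < i)%N by move/allP: hall; apply; rewrite map_f.
have [u1 [hu1 e1]] := xi_xk_pow (f k) ki.
have [u2 [hu2 e2]] := IH hs' ir.
have [u3 [e3 [hu3 _]]] := (good_exp (f k) (good_x k)).1 u2.
exists (u1 * u3); split; first exact: unitRM hu1 (hu3 hu2).
rewrite !big_cons (negPf kni) addn0 mulrA e1 -!mulrA e2 !mulrA.
by rewrite -(mulrA (iota u1)) e3 rmorphM !mulrA.
Qed.

Lemma X_lem (i : 'I_n) (nu : E) : exists u, unitR u /\
  x i * mon nu = iota u * mon (expo_add nu (ue i)).
Proof.
have hs : sorted ltn (map val (index_enum 'I_n)).
  by rewrite [index_enum _]unlock -enumT val_enum_ord iota_ltn_sorted.
have [u [hu e]] := X_gen nu hs (mem_index_enum i).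
exists u; split=> //; rewrite /Defs.mon e; congr (_ * _).
by apply: eq_bigr => k _; rewrite !ffunE.
Qed.

Lemma pow_lem (i : 'I_n) e (nu : E) : exists u, unitR u /\
  x i ^+ e * mon nu = iota u * mon [ffun j => (nu j + e * (j == i))%N].
Proof.
elim: e => [|e [u [hu IH]]].
  exists 1; split; first exact: unitR1.
  by rewrite expr0 mul1r rmorph1 mul1r; apply: mon_eq => j; rewrite ffunE mul0n addn0.
have [u2 [hu2 e2]] := X_lem i [ffun j => (nu j + e * (j == i))%N].
exists (sigma i u * u2); split; first by apply: unitRM => //; apply: sig_unit.
rewrite exprS -mulrA IH mulrA hsig -mulrA e2 mulrA -rmorphM; congr (_ * _).
by apply: mon_eq => j; rewrite !ffunE; case: (j == i) => /=; lia.
Qed.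

Lemma prod_lem (f : 'I_n -> nat) (r : seq 'I_n) (nu : E) : exists u, unitR u /\
  (\prod_(k <- r) x k ^+ f k) * mon nu = iota u * mon [ffun j => (nu j + f j * count_mem j r)%N].
Proof.
elim: r => [|k r [u [hu IH]]].
  exists 1; split; first exact: unitR1.
  by rewrite big_nil mul1r rmorph1 mul1r; apply: mon_eq => j; rewrite ffunE muln0 addn0.
have [u2 [hu2 e2]] := pow_lem k (f k) [ffun j => (nu j + f j * count_mem j r)%N].
have [u3 [e3 [hu3 _]]] := (good_exp (f k) (good_x k)).1 u.
exists (u3 * u2); split; first exact: unitRM (hu3 hu) hu2.
rewrite big_cons -mulrA IH mulrA e3 -mulrA e2 mulrA -rmorphM; congr (_ * _).
apply: mon_eq => j; rewrite !ffunE /=; case: (eqVneq j k) => [->|jk].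
  by rewrite /=; lia.
by rewrite /=; lia.
Qed.

Lemma mon_mul (g nu : E) : exists u, unitR u /\
  mon g * mon nu = iota u * mon (expo_add g nu).
Proof.
have [u [hu e]] := prod_lem g (index_enum 'I_n) nu.
exists u; split=> //; rewrite {1}/Defs.mon e; congr (_ * _).
apply: mon_eq => j; rewrite !ffunE (count_uniq_mem _ (index_enum_uniq _)) mem_index_enum.
by rewrite muln1 addnC.
Qed.


Definition le_ex (a b : E) : bool := [forall j, (a j <= b j)%N].
Definition sub_ex (b a : E) : E := [ffun j => (b j - a j)%N].

Lemma add_sub_ex a b : le_ex a b -> expo_add (sub_ex b a) a = b.
Proof. by move/forallP => h; apply/ffunP => j; rewrite !ffunE subnK. Qed.

Lemma sub_add_ex g a : sub_ex (expo_add g a) a = g.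
Proof. by apply/ffunP => j; rewrite !ffunE addnK. Qed.

Lemma le_add_ex g a : le_ex a (expo_add g a).
Proof. by apply/forallP => j; rewrite ffunE leq_addl. Qed.

Lemma eq_add_ex g a b : (expo_add g a == b) = le_ex a b && (g == sub_ex b a).
Proof.
apply/eqP/andP => [<-|[h /eqP ->]]; last exact: add_sub_ex.
by rewrite sub_add_ex le_add_ex.
Qed.

Lemma le_ex_trans a b d : le_ex a b -> le_ex b d -> le_ex a d.
Proof.
move=> /forallP h1 /forallP h2; apply/forallP => j.
exact: leq_trans (h1 j) (h2 j).
Qed.

Lemma termW (g a : E) (cc : R) : exists w, mon g * iota cc * mon a = iota w * mon (expo_add g a).
Proof.
have [h _] := good_mon g; have [r' [e _]] := h cc.
have [u [_ e2]] := mon_mul g a.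
by exists (r' * u); rewrite e -mulrA e2 mulrA rmorphM.
Qed.

Lemma N4 (g b : E) e : mon g * iota e * mon b = 0 -> e = 0.
Proof.
have [h _] := good_mon g; have [r' [e1 [_ z]]] := h e.
have [u [[u' [hu1 hu2]] e2]] := mon_mul g b.
rewrite e1 -mulrA e2 mulrA -rmorphM => /(congr1 (coef^~ (expo_add g b))).
rewrite coef_term eqxx coef0 => h0; apply: z.
by rewrite -[r']mulr1 -hu1 mulrA h0 mul0r.
Qed.

Lemma coef_sum_cond (I : Type) (l : seq I) (P : pred I) (F : I -> A) b :
  coef (\sum_(i <- l | P i) F i) b = \sum_(i <- l | P i) coef (F i) b.
Proof.
rewrite big_mkcond coef_sum [RHS]big_mkcond; apply: eq_bigr => i _.
by case: (P i); rewrite ?coef0.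
Qed.

Section Data.
Variables (m t : nat) (c : 'I_t -> R) (al : 'I_t -> E) (idx : 'I_t -> 'I_m).

Definition W (j : 'I_t) (b : E) : R :=
  coef (mon (sub_ex b (al j)) * iota (c j) * mon (al j)) b.

Lemma W_eq j b : le_ex (al j) b ->
  mon (sub_ex b (al j)) * iota (c j) * mon (al j) = iota (W j b) * mon b.
Proof.
move=> hle; have [w e] := termW (sub_ex b (al j)) (al j) (c j).
rewrite add_sub_ex // in e.
by rewrite /W e coef_term eqxx.
Qed.

Lemma term_mul j g r : iota r * mon g * iota (c j) * mon (al j) =
  iota (r * W j (expo_add g (al j))) * mon (expo_add g (al j)).
Proof.
have := W_eq (le_add_ex g (al j)); rewrite sub_add_ex => e.
by rewrite -!mulrA (mulrA (mon g)) e mulrA rmorphM.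
Qed.

Lemma coef_mulc (a : A) j b : coef (a * iota (c j) * mon (al j)) b =
  if le_ex (al j) b then coef a (sub_ex b (al j)) * W j b else 0.
Proof.
rewrite {1}(repE a) !mulr_suml coef_sum.
under eq_bigr do rewrite term_mul coef_term eq_add_ex.
case: ifP => hle /=; last by rewrite big1.
rewrite [RHS]big_mkcond /=; apply: eq_bigr => p _.
case: eqP => // e; congr (_ * _); congr (W j _).
by rewrite e add_sub_ex.
Qed.

Definition hv (b : E) (i : 'I_m) (v : 'cV[R]_t) : 'cV[A]_t :=
  \col_j (if (idx j == i) && le_ex (al j) b then iota (v j 0) * mon (sub_ex b (al j)) else 0).

Definition Kc (b : E) (i : 'I_m) (v : 'cV[R]_t) : bool :=
  \sum_(j | (idx j == i) && le_ex (al j) b) v j 0 * W j b == 0.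

Lemma syz_entry (h : 'cV[A]_t) l :
  (\sum_(k < t) vec_e (idx k) (h k 0 * (iota (c k) * mon (al k)))) l 0 =
  \sum_(k | idx k == l) h k 0 * iota (c k) * mon (al k).
Proof.
rewrite summxE [RHS]big_mkcond; apply: eq_bigr => k _; rewrite mxE eq_sym.
by case: ifP; rewrite ?mulrA.
Qed.

Lemma hv_syz b i v : Kc b i v -> syzygy iota x c al idx (hv b i v).
Proof.
move=> /eqP hK; apply/matrixP => l z; rewrite (ord1 z) syz_entry mxE.
transitivity (\sum_(k | idx k == l) (if (idx k == i) && le_ex (al k) b
    then iota (v k 0 * W k b) * mon b else 0)).
  apply: eq_bigr => k _; rewrite mxE; case: ifP => [/andP[_ hle]|_].
    by rewrite term_mul add_sub_ex.
  by rewrite !mul0r.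
case: (eqVneq l i) => [->|li].
  rewrite -big_mkcondr /=.
  transitivity (iota (\sum_(j | (idx j == i) && le_ex (al j) b) v j 0 * W j b) * mon b).
    by rewrite rmorph_sum mulr_suml; apply: eq_bigl => j; rewrite andbA andbb.
  by rewrite hK rmorph0 mul0r.
rewrite big1 // => k /eqP hk; rewrite hk (negPf li) /=.
by [].
Qed.

Lemma hv_hom b i v : homogeneous_syz iota x al idx (hv b i v).
Proof.
exists b, i => j; rewrite mxE; case: ifP => [/andP[/eqP hi hle]|_].
  exists (v j 0), (sub_ex b (al j)); split=> //; right; split=> //.
  exact: add_sub_ex.
by exists 0, ez; split; [rewrite rmorph0 mul0r | left].
Qed.

Lemma hv0 b i : hv b i 0 = 0.
Proof.
apply/matrixP => j z; rewrite !mxE; case: ifP => // _.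
by rewrite rmorph0 mul0r.
Qed.

Lemma hvD b i u v : hv b i (u + v) = hv b i u + hv b i v.
Proof.
apply/matrixP => j z; rewrite !mxE; case: ifP => _; last by rewrite addr0.
by rewrite rmorphD mulrDl.
Qed.

Lemma hvZ b i a v : hv b i (a *: v) = iota a *: hv b i v.
Proof.
apply/matrixP => j z; rewrite !mxE; case: ifP => _; last by rewrite mulr0.
by rewrite rmorphM mulrA.
Qed.

Lemma inspan_hv b i (gens : seq 'cV[R]_t) v : inspan gens v ->
  inspan (map (hv b i) gens) (hv b i v).
Proof.
elim: gens v => [|g gens IH] v /=; first by move=> ->; rewrite hv0.
move=> [r [w [hw ->]]]; exists (iota r), (hv b i w); split; first exact: IH.
by rewrite hvD hvZ.
Qed.


Definition muJ (J : {set 'I_t}) : E := [ffun l => \max_(j in J) al j l].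

Lemma shift b i v : Kc b i v ->
  exists v', Kc (muJ [set j | (idx j == i) && le_ex (al j) b]) i v' /\
   hv b i v = mon (sub_ex b (muJ [set j | (idx j == i) && le_ex (al j) b])) *:
              hv (muJ [set j | (idx j == i) && le_ex (al j) b]) i v'.
Proof.
move=> hK; set J := [set j | _]; set mu := muJ J.
have le_mu : forall j, j \in J -> le_ex (al j) mu.
  move=> j jJ; apply/forallP => l; rewrite ffunE.
  exact: (@leq_bigmax_cond _ (fun j => j \in J) (fun j => al j l) j jJ).
have mu_le : le_ex mu b.
  apply/forallP => l; rewrite ffunE; apply/bigmax_leqP => j.
  by rewrite inE => /andP[_ /forallP]; apply.
have cond_eq : forall j, ((idx j == i) && le_ex (al j) mu) = ((idx j == i) && le_ex (al j) b).
  move=> j; apply/andP/andP => [[h1 h2]|[h1 h2]]; split=> //.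
    exact: le_ex_trans h2 mu_le.
  by apply: le_mu; rewrite inE h1 h2.
set d := sub_ex b mu.
have hz : forall j, exists z, (idx j == i) && le_ex (al j) b ->
   mon d * iota z * mon (sub_ex mu (al j)) = iota (v j 0) * mon (sub_ex b (al j)).
  move=> j; case hj: ((idx j == i) && le_ex (al j) b); last by exists 0.
  have hjm : le_ex (al j) mu by rewrite -cond_eq in hj; case/andP: hj.
  have [u [[u' [hu1 hu2]] e]] := mon_mul d (sub_ex mu (al j)).
  have [_ hs] := good_mon d; have [z ez] := hs (v j 0 * u').
  exists z => _; rewrite ez -mulrA e mulrA -rmorphM -mulrA hu2 mulr1.
  congr (_ * _); apply: mon_eq => l; rewrite !ffunE.
  move/forallP: hjm => /(_ l); move/forallP: mu_le => /(_ l); rewrite ffunE.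
  move: (\max_(j0 in J) al j0 l) => M; lia.
have [z hzz] := fin_all_exists hz.
exists (\col_j z j); split; last first.
  apply/matrixP => j k; rewrite (ord1 k) !mxE cond_eq; case: ifP => hj; last by rewrite mulr0.
  by rewrite mulrA (hzz j hj).
apply/eqP; apply: (@N4 d mu).
transitivity (\sum_(j | (idx j == i) && le_ex (al j) mu) iota (v j 0 * W j b) * mon b).
  rewrite rmorph_sum mulr_sumr mulr_suml; apply: eq_bigr => j hj.
  have hjm : le_ex (al j) mu by case/andP: hj.
  have hjb := hj; rewrite cond_eq in hjb.
  rewrite mxE rmorphM -!mulrA -(W_eq hjm) !mulrA (hzz j hjb) term_mul add_sub_ex //.
  by case/andP: hjb.
rewrite -mulr_suml -rmorph_sum (eq_bigl _ _ cond_eq) (eqP hK).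
by rewrite rmorph0 mul0r.
Qed.

Lemma syz_Kc (h : 'cV[A]_t) b i : syzygy iota x c al idx h ->
  Kc b i (\col_j coef (h j 0) (sub_ex b (al j))).
Proof.
move=> hs; have := congr1 (fun M : 'cV[A]_m => coef (M i 0) b) hs.
rewrite /= syz_entry mxE coef0 coef_sum_cond.
under eq_bigr do rewrite coef_mulc.
rewrite -big_mkcondr /= => e; apply/eqP; apply: etrans e; apply: eq_bigr => j _.
by rewrite mxE.
Qed.

Lemma decomp (h : 'cV[A]_t) : exists S : seq E,
  h = \sum_(b <- S) \sum_(i < m) hv b i (\col_j coef (h j 0) (sub_ex b (al j))).
Proof.
exists (undup [seq expo_add p.1 (al j) | j <- enum 'I_t, p <- rep (h j 0)]).
set S := undup _.
apply/matrixP => j z; rewrite (ord1 z) summxE.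
under eq_bigr do rewrite summxE.
under eq_bigr => b _.
  rewrite (bigD1 (idx j)) //= big1; last first.
    by move=> i /negPf hi; rewrite mxE eq_sym hi.
  rewrite addr0 mxE eqxx /=.
  over.
apply: coef_inj => g; rewrite coef_sum.
have ht : forall b, coef (if le_ex (al j) b then iota ((\col_j0 coef (h j0 0) (sub_ex b (al j0))) j 0) * mon (sub_ex b (al j)) else 0) g
    = if expo_add g (al j) == b then coef (h j 0) g else 0.
  move=> b; rewrite eq_add_ex; case: ifP => hle /=; last by rewrite coef0.
  by rewrite mxE coef_term eq_sym; case: eqP => // ->.
rewrite (eq_bigr _ (fun b _ => ht b)) sum_pick ?undup_uniq //.
case: ifP => // hn; rewrite /coef big1_seq // => p /andP[/eqP e pr].
have : expo_add p.1 (al j) \in S.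
  rewrite mem_undup; apply: (allpairs_f_dep (fun (j : 'I_t) (p : E * R) => expo_add p.1 (al j))) => //.
  by rewrite mem_enum.
by rewrite e hn.
Qed.

Lemma main_sec (hN : left_noetherian R) : exists gens : seq 'cV[A]_t,
  (forall g, g \in gens -> syzygy iota x c al idx g /\ homogeneous_syz iota x al idx g) /\
  (forall h, syzygy iota x c al idx h -> inspan gens h).
Proof.
have hGG : forall p : ('I_m * {set 'I_t})%type, exists gs : seq 'cV[R]_t,
    (forall g, g \in gs -> Kc (muJ p.2) p.1 g) /\ (forall v, Kc (muJ p.2) p.1 v -> inspan gs v).
  move=> p; have := @noeth_mod R hN t (Kc (muJ p.2) p.1).
  case.
  - by rewrite /Kc unfold_in /=; apply/eqP; apply: big1 => j _; rewrite mxE mul0r.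
  - move=> u w; rewrite !unfold_in /Kc => /eqP hu /eqP hw.
    under eq_bigr do rewrite mxE mulrDl.
    by rewrite big_split /= hu hw addr0.
  - move=> a u; rewrite !unfold_in /Kc => /eqP hu.
    under eq_bigr do rewrite mxE -mulrA.
    by rewrite -mulr_sumr hu mulr0.
  move=> gs [G1 G2]; exists gs; split.
    by move=> g /G1; rewrite unfold_in.
  by move=> v hv; apply: G2; rewrite unfold_in.
have [GG hG] := fin_all_exists hGG.
pose gens := flatten [seq map (hv (muJ p.2) p.1) (GG p) | p <- index_enum ('I_m * {set 'I_t})%type].
have sub : forall p g, g \in GG p -> hv (muJ p.2) p.1 g \in gens.
  move=> p g hg; apply/flattenP; exists (map (hv (muJ p.2) p.1) (GG p)).
    by apply: (map_f (fun p => map (hv (muJ p.2) p.1) (GG p))); apply: mem_index_enum.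
  exact: map_f.
exists gens; split.
  move=> g /flattenP [s /mapP [p _ ->] /mapP [v vin ->]].
  by split; [apply: hv_syz; apply: (hG p).1 | apply: hv_hom].
move=> h hs; have [S eS] := decomp h; rewrite eS.
apply: inspan_sum => b; apply: inspan_sum => i.
have [v' [hK' ev]] := shift (syz_Kc b i hs); rewrite ev; apply: inspanZ.
apply: (@inspan_sub _ _ (map (hv (muJ [set j | (idx j == i) && le_ex (al j) b]) i)
   (GG (i, [set j | (idx j == i) && le_ex (al j) b])))).
  by move=> g /mapP [w win ->]; apply: (sub (i, [set j | (idx j == i) && le_ex (al j) b])).
by apply: inspan_hv; apply: (hG (i, [set j | (idx j == i) && le_ex (al j) b])).2.
Qed.

End Data.
End Sig.
End PBW.

Theorem proposition36 (R A : nzRingType) (iota : {rmorphism R -> A}) (n : nat)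
    (x : 'I_n -> A)
    (hPBW : sigma_PBW iota x) (hqc : quasi_commutative iota x)
    (hbij : bijective_PBW iota x) (hnoeth : left_noetherian R)
    (m t : nat) (c : 'I_t -> R) (hc : forall k, c k != 0)
    (al : 'I_t -> expo n) (idx : 'I_t -> 'I_m) :
  exists gens : seq 'cV[A]_t,
    (forall g, g \in gens -> syzygy iota x c al idx g /\ homogeneous_syz iota x al idx g) /\
    (forall h : 'cV[A]_t, syzygy iota x c al idx h ->
       exists a : 'I_(size gens) -> A,
         h = \sum_(k < size gens) a k *: gens`_k).
Proof.
have [sigma [hs hb]] := sigma_ex hPBW hqc hbij.
have [gens [h1 h2]] := main_sec hPBW hqc hbij hs hb c al idx hnoeth.
exists gens; split => // h hh.
exact: inspan_idx (h2 h hh).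
Qed.
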